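(* Let $(H,+,\circ)$ be a commutative multiplicative hyperring with identity and let $P_1,\dots,P_n$ be prime strong $\mathcal{C}$-hyperideals of $H$ such that the intersection of any $n-1$ of the $P_i$'s is not equal to $P_1\cap\cdots\cap P_n$. Then $P_1\cap\cdots\cap P_n$ is an sdf-absorbing hyperideal of $H$ if and only if there is at most one $1\leq i\leq n$ such that $H/P_i$ is not of characteristic $2$.
   Context: A commutative multiplicative hyperring $(H,+,\circ)$ consists of an abelian group $(H,+)$ and an associative, commutative hyperoperation $\circ: H\times H\to P^*(H)$ with $x\circ(y+z)\subseteq x\circ y+x\circ z$ and $x\circ(-y)=-(x\circ y)=(-x)\circ y$. For subsets $A,B$, $A\circ B=\bigcup_{a\in A,b\in B}a\circ b$, $A\pm B=\{a\pm b\}$; $x^2=x\circ x$. Identity: $x\in x\circ 1$ for all $x$. A hyperideal is a nonempty $P$ with $x-y\in P$ and $r\circ x\subseteq P$ for $x,y\in P$, $r\in H$; it is prime if proper and $x\circ y\subseteq P$ implies $x\in P$ or $y\in P$. $H/P=\{x+P\}$ with coset addition and $(x+P)*(y+P)=\{z+P: z\in x\circ y\}$; characteristic $\alpha$ means $\alpha$ is the least positive integer with $\alpha u=0$ for all $u$. Let $\mathcal{C}=\{c_1\circ\cdots\circ c_n: c_i\in H\}$ and $\mathfrak{C}=\{\sum_{i=1}^m C_i: C_i\in\mathcal{C}\}$; $P$ is a strong $\mathcal{C}$-hyperideal if for every $D\in\mathfrak{C}$, $D\cap P\neq\varnothing$ implies $D\subseteq P$. A proper hyperideal $P$ is sdf-absorbing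 if whenever $0\neq x,y\in H$ and $x^2-y^2\subseteq P$, then $x-y\in P$ or $x+y\in P$. *)

(* Defs.v *)
From HB Require Import structures.
From mathcomp Require Import all_boot all_algebra.
Set Implicit Arguments. Unset Strict Implicit. Unset Printing Implicit Defensive.
Import GRing.Theory.
Local Open Scope ring_scope.

Section Hyperring.
Variable H : zmodType.

(* a hyperoperation: [hm x y z] means z \in x o y *)
Definition hyperop := H -> H -> H -> Prop.

Definition hset := H -> Prop.
Definition hset1 (c : H) : hset := fun z => z = c.
Definition hsub_set (A B : hset) : Prop := forall z, A z -> B z.
Definition hset_eq (A B : hset) : Prop := forall z, A z <-> B z.

Definition setmul (hm : hyperop) (A B : hset) : hset :=
  fun z => exists a b, A a /\ B b /\ hm a b z.
Definition setadd (A B : hset) : hset := fun z => exists a b, A a /\ B b /\ z = a + b.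
Definition setsub (A B : hset) : hset := fun z => exists a b, A a /\ B b /\ z = a - b.
Definition setopp (A : hset) : hset := fun z => exists a, A a /\ z = - a.

Record cm_hyperring (hm : hyperop) : Prop := {
  hm_nonempty : forall x y, exists z, hm x y z;
  hm_assoc : forall x y z,
     hset_eq (setmul hm (hm x y) (hset1 z)) (setmul hm (hset1 x) (hm y z));
  hm_comm : forall x y, hset_eq (hm x y) (hm y x);
  hm_distr : forall x y z, hsub_set (hm x (y + z)) (setadd (hm x y) (hm x z));
  hm_oppr : forall x y, hset_eq (hm x (- y)) (setopp (hm x y));
  hm_oppl : forall x y, hset_eq (hm (- x) y) (setopp (hm x y))
}.

Definition hm_identity (hm : hyperop) (e : H) : Prop := forall x, hm x e x.

Definition hyperideal (hm : hyperop) (P : hset) : Prop :=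
  (exists x, P x) /\
  (forall x y, P x -> P y -> P (x - y)) /\
  (forall r x, P x -> hsub_set (hm r x) P).

Definition proper (P : hset) : Prop := exists x, ~ P x.

Definition prime_hyperideal (hm : hyperop) (P : hset) : Prop :=
  hyperideal hm P /\ proper P /\
  (forall x y, hsub_set (hm x y) P -> P x \/ P y).

Definition hprod (hm : hyperop) (c : H) (cs : seq H) : hset :=
  foldl (fun A d => setmul hm A (hset1 d)) (hset1 c) cs.

(* C_1 + ... + C_m, each C_i = hprod of a nonempty list, m >= 1 *)
Definition Csum (hm : hyperop) (C0 : H * seq H) (Cs : seq (H * seq H)) : hset :=
  foldl (fun A p => setadd A (hprod hm p.1 p.2)) (hprod hm C0.1 C0.2) Cs.

Definition strong_C_hyperideal (hm : hyperop) (P : hset) : Prop :=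
  hyperideal hm P /\
  (forall C0 Cs, (exists z, Csum hm C0 Cs z /\ P z) ->
                 hsub_set (Csum hm C0 Cs) P).

Definition sq_diff (hm : hyperop) (x y : H) : hset := setsub (hm x x) (hm y y).

Definition sdf_absorbing (hm : hyperop) (P : hset) : Prop :=
  hyperideal hm P /\ proper P /\
  (forall x y, x <> 0 -> y <> 0 -> hsub_set (sq_diff hm x y) P ->
     P (x - y) \/ P (x + y)).

(* H/P has characteristic a : a is the least positive integer with a u = 0
   for every u = x + P of H/P, i.e. a x \in P for all x *)
Definition quot_char (P : hset) (a : nat) : Prop :=
  (0 < a)%N /\ (forall x : H, P (x *+ a)) /\
  (forall b : nat, (0 < b)%N -> (forall x : H, P (x *+ b)) -> (a <= b)%N).

Definition hcap n (P : 'I_n -> hset) : hset := fun x => forall i, P i x.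
Definition hcap_but n (P : 'I_n -> hset) (j : 'I_n) : hset :=
  fun x => forall i, i != j -> P i x.

End Hyperring.

(* Main.v *)
Require Import Defs.
From mathcomp Require Import all_boot all_algebra.
From Stdlib Require Import Classical.
Set Implicit Arguments. Unset Strict Implicit.
Import GRing.Theory.
Open Scope ring_scope.

Lemma hprod1 (H : zmodType) (hm : hyperop H) c d z :
  hprod hm c [:: d] z <-> hm c d z.
Proof.
rewrite /hprod /= /setmul /hset1; split.
  by move=> [a [b [-> [-> h]]]].
by move=> h; exists c, d.
Qed.

Lemma hcomm (H : zmodType) (hm : hyperop H) x y z :
  cm_hyperring hm -> hm x y z -> hm y x z.
Proof. by move=> HR h; apply: ((hm_comm HR x y z).1 h). Qed.

Lemma hoppl (H : zmodType) (hm : hyperop H) x y c :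
  cm_hyperring hm -> hm x y c -> hm (- x) y (- c).
Proof. by move=> HR h; apply: ((hm_oppl HR x y (- c)).2); exists c. Qed.

Lemma hoppr_out (H : zmodType) (hm : hyperop H) x y b :
  cm_hyperring hm -> hm x (- y) b -> exists c, hm x y c /\ b = - c.
Proof. by move=> HR h; have := (hm_oppr HR x y b).1 h. Qed.

Lemma id0 (H : zmodType) (hm : hyperop H) (P : hset H) :
  hyperideal hm P -> P 0.
Proof. by move=> [[x hx] [hs _]]; rewrite -(subrr x); apply: hs. Qed.

Lemma idN (H : zmodType) (hm : hyperop H) (P : hset H) x :
  hyperideal hm P -> P x -> P (- x).
Proof. move=> hI hx; rewrite -sub0r; apply: (proj1 (proj2 hI)) => //; exact: id0 hI. Qed.

Lemma idD (H : zmodType) (hm : hyperop H) (P : hset H) x y :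
  hyperideal hm P -> P x -> P y -> P (x + y).
Proof. move=> hI hx hy; rewrite -[y]opprK; apply: (proj1 (proj2 hI)) => //; exact: (idN hI hy). Qed.

Lemma idB (H : zmodType) (hm : hyperop H) (P : hset H) x y :
  hyperideal hm P -> P x -> P y -> P (x - y).
Proof. by move=> hI hx hy; apply: (proj1 (proj2 hI)). Qed.

Lemma idMr (H : zmodType) (hm : hyperop H) (P : hset H) r x z :
  hyperideal hm P -> P x -> hm r x z -> P z.
Proof. by move=> hI hx hz; apply: (proj2 (proj2 hI)) hz. Qed.

Lemma idMl (H : zmodType) (hm : hyperop H) (P : hset H) r x z :
  cm_hyperring hm -> hyperideal hm P -> P x -> hm x r z -> P z.
Proof. by move=> HR hI hx hz; apply: (idMr hI hx); exact: (hcomm HR hz). Qed.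

Lemma sC2 (H : zmodType) (hm : hyperop H) (P : hset H) c1 d1 c2 d2 :
  strong_C_hyperideal hm P ->
  (exists a b, hm c1 d1 a /\ hm c2 d2 b /\ P (a + b)) ->
  forall a b, hm c1 d1 a -> hm c2 d2 b -> P (a + b).
Proof.
move=> [_ hS] [a0 [b0 [h1 [h2 hp]]]] a b ha hb.
apply: (hS (c1, [:: d1]) [:: (c2, [:: d2])]).
  exists (a0 + b0); split => //; exists a0, b0.
  by split; [apply/hprod1 | split; [apply/hprod1|]].
by exists a, b; split; [apply/hprod1 | split; [apply/hprod1|]].
Qed.

Lemma sC4 (H : zmodType) (hm : hyperop H) (P : hset H) c1 d1 c2 d2 c3 d3 c4 d4 :
  strong_C_hyperideal hm P ->
  (exists a b c d, hm c1 d1 a /\ hm c2 d2 b /\ hm c3 d3 c /\ hm c4 d4 d /\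
     P (a + b + c + d)) ->
  forall a b c d, hm c1 d1 a -> hm c2 d2 b -> hm c3 d3 c -> hm c4 d4 d ->
     P (a + b + c + d).
Proof.
move=> [_ hS] [a0 [b0 [c0 [e0 [h1 [h2 [h3 [h4 hp]]]]]]]] a b c d ha hb hc hd.
apply: (hS (c1, [:: d1]) [:: (c2, [:: d2]); (c3, [:: d3]); (c4, [:: d4])]).
  exists (a0 + b0 + c0 + e0); split => //.
  exists (a0 + b0 + c0), e0; split; last by split; [apply/hprod1|].
  exists (a0 + b0), c0; split; last by split; [apply/hprod1|].
  by exists a0, b0; split; [apply/hprod1 | split; [apply/hprod1|]].
exists (a + b + c), d; split; last by split; [apply/hprod1|].
exists (a + b), c; split; last by split; [apply/hprod1|].
by exists a, b; split; [apply/hprod1 | split; [apply/hprod1|]].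
Qed.

Lemma sq_P (H : zmodType) (hm : hyperop H) (P : hset H) x y :
  cm_hyperring hm -> prime_hyperideal hm P -> strong_C_hyperideal hm P ->
  (hsub_set (sq_diff hm x y) P <-> P (x - y) \/ P (x + y)).
Proof.
move=> HR [hI [_ hpr]] hS; split.
- move=> hs; apply: hpr => z hz.
  have [p [q [hp [hq ->]]]] := hm_distr HR hz.
  move/(hcomm HR): hp => hp; move/(hcomm HR): hq => hq.
  have [a [b' [ha [hb' ->]]]] := hm_distr HR hp.
  have [c [hc ->]] := hoppr_out HR hb'.
  have [c' [d' [hc' [hd' ->]]]] := hm_distr HR hq.
  have [d [hd ->]] := hoppr_out HR hd'.
  have -> : a + - c + (c' + - d) = a + - c + c' + - d by rewrite addrA.
  apply: (sC4 (c1:=x) (d1:=x) (c2:=-x) (d2:=y) (c3:=y) (d3:=x) (c4:=-y) (d4:=y) hS) => //.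
  + have [a0 ha0] := hm_nonempty HR x x.
    have [d0 hd0] := hm_nonempty HR y y.
    have [c0 hc0] := hm_nonempty HR x y.
    exists a0, (- c0), c0, (- d0); split => //.
    split; first exact: (hoppl HR hc0).
    split; first exact: (hcomm HR hc0).
    split; first exact: (hoppl HR hd0).
    rewrite subrK; apply: hs; exists a0, d0; split => //.
  + exact: (hoppl HR hc).
  + exact: (hoppl HR hd).
- move=> hxy z [a [d [ha [hd ->]]]].
  apply: (sC2 (c1:=x) (d1:=x) (c2:=-y) (d2:=y) hS) => //; last exact: (hoppl HR hd).
  have [a0 ha0] := hm_nonempty HR x x.
  case: hxy => hp.
  + have ha1 : hm x (y + (x - y)) a0 by rewrite addrC subrK.
    have [c [q [hc [hq ea]]]] := hm_distr HR ha1.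
    have {hc} hc : hm y (y + (x - y)) c by rewrite addrC subrK; exact: hcomm HR hc.
    have [d0 [q' [hd0 [hq' ec]]]] := hm_distr HR hc.
    exists a0, (- d0); split => //; split; first exact: (hoppl HR hd0).
    rewrite ea ec addrAC (addrAC d0) subrr add0r.
    by apply: (idD hI); [exact: (idMr hI hp hq') | exact: (idMr hI hp hq)].
  + have ha1 : hm x (- y + (x + y)) a0 by rewrite (addrC x y) addKr.
    have [c [q [hc [hq ea]]]] := hm_distr HR ha1.
    have [c1 [hc1 ec]] := hoppr_out HR hc.
    have {hc1} hc1 : hm y (- y + (x + y)) c1 by rewrite (addrC x y) addKr; exact: hcomm HR hc1.
    have [c2 [q' [hc2 [hq' ec1]]]] := hm_distr HR hc1.
    have [d0 [hd0 ec2]] := hoppr_out HR hc2.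
    exists a0, (- d0); split => //; split; first exact: (hoppl HR hd0).
    rewrite ea ec ec1 ec2 opprD opprK addrAC (addrAC d0) subrr add0r addrC.
    by apply: (idB hI); [exact: (idMr hI hp hq) | exact: (idMr hI hp hq')].
Qed.

Lemma nchar (H : zmodType) (hm : hyperop H) (P : hset H) :
  hyperideal hm P -> Defs.proper P -> ~ quot_char P 2 -> exists a, ~ P (a + a).
Proof.
move=> hI [w hw] nq; apply: NNPP => hn; apply: nq; split => //; split.
  by move=> x; rewrite mulr2n; apply: NNPP => h; apply: hn; exists x.
by case=> [|[|b]] // _ hb; case: hw; exact: (hb w).
Qed.

Lemma char2P (H : zmodType) (P : hset H) x : quot_char P 2 -> P (x + x).
Proof. by move=> [_ [h _]]; rewrite -mulr2n. Qed.

Lemma twice (H : zmodType) (hm : hyperop H) (P : hset H) u a al :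
  cm_hyperring hm -> prime_hyperideal hm P -> strong_C_hyperideal hm P ->
  hm u a al -> ~ P u -> ~ P (a + a) -> ~ P (al + al).
Proof.
move=> HR [hI [_ hpr]] hS hal nu na hp.
have : P u \/ P (a + a).
  apply: hpr => z hz.
  have [p [q [hp' [hq ->]]]] := hm_distr HR hz.
  apply: (sC2 (c1:=u) (d1:=a) (c2:=u) (d2:=a) hS) => //.
  by exists al, al.
by case.
Qed.

Lemma char2_both (H : zmodType) (hm : hyperop H) (Q : hset H) x y :
  hyperideal hm Q -> quot_char Q 2 -> Q (x - y) \/ Q (x + y) -> Q (x - y) /\ Q (x + y).
Proof.
move=> hI hq [h|h].
  split => //; have -> : x + y = x - y + (y + y) by rewrite addrACA addNr addr0.
  by apply: (idD hI) => //; exact: char2P.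
split => //; have -> : x - y = x + y - (y + y) by rewrite addrKA.
by apply: (idB hI) => //; exact: char2P.
Qed.

Lemma hcap_ideal (H : zmodType) (hm : hyperop H) n (P : 'I_n -> hset H) :
  (forall i, hyperideal hm (P i)) -> hyperideal hm (hcap P).
Proof.
move=> hI; split; first by exists 0 => i; exact: id0 (hI i).
split; first by move=> x y hx hy i; apply: (idB (hI i)).
by move=> r x hx z hz i; apply: (idMr (hI i) (hx i) hz).
Qed.

Close Scope ring_scope.

Theorem mainTheorem8 (H : zmodType) (hm : hyperop H) (e : H) (n : nat)
    (P : 'I_n -> hset H) :
  cm_hyperring hm -> hm_identity hm e -> (0 < n)%N ->
  (forall i, prime_hyperideal hm (P i) /\ strong_C_hyperideal hm (P i)) ->
  (forall j, ~ hset_eq (hcap_but P j) (hcap P)) ->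
  (sdf_absorbing hm (hcap P) <->
   (forall i j : 'I_n, ~ quot_char (P i) 2 -> ~ quot_char (P j) 2 -> i = j)).
Proof.
move=> HR _ n0 HP Hirr.
have hI i : hyperideal hm (P i) by case: (HP i) => [[]].
have hPr i : Defs.proper (P i) by case: (HP i) => [[_ []]].
have sqk i x y := sq_P x y HR (proj1 (HP i)) (proj2 (HP i)).
have wit i : exists u, hcap_but P i u /\ ~ P i u.
  apply: NNPP => hn; apply: (Hirr i) => z; split.
  - move=> hz k; case: (eqVneq k i) => [->|hk]; last exact: hz.
    by apply: NNPP => nz; apply: hn; exists z.
  - by move=> hz k _; exact: hz.
split.
- move=> [_ [_ hsdf]] i j ni nj.
  case: (eqVneq i j) => // ne.
  have [a na] := nchar (hI i) (hPr i) ni.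
  have [b nb] := nchar (hI j) (hPr j) nj.
  have [u [hu nu]] := wit i.
  have [v [hv nv]] := wit j.
  have [al hal] := hm_nonempty HR u a.
  have [be hbe] := hm_nonempty HR v b.
  have alk k : k != i -> P k al by move=> hk; exact: (idMl HR (hI k) (hu k hk) hal).
  have bek k : k != j -> P k be by move=> hk; exact: (idMl HR (hI k) (hv k hk) hbe).
  have nal : ~ P i (al + al)%R by apply: (twice HR (proj1 (HP i)) (proj2 (HP i)) hal).
  have nbe : ~ P j (be + be)%R by apply: (twice HR (proj1 (HP j)) (proj2 (HP j)) hbe).
  have beI : P i (be + be)%R by apply: (idD (hI i)); apply: bek.
  have e1 : ((al + be) - (al - be))%R = (be + be)%R by rewrite opprB addrC addrA subrK.
  have e2 : ((al + be) + (al - be))%R = (al + al)%R by rewrite addrACA subrr addr0.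
  have := hsdf (al + be)%R (al - be)%R.
  rewrite e1 e2 => h.
  case: h.
  + move=> h0; apply: nal.
    have -> : al = (- be)%R by rewrite -[al](addrK be) h0 sub0r.
    by rewrite -opprD; apply: (idN (hI i)).
  + by move=> h0; apply: nal; rewrite (subr0_eq h0).
  + move=> z hz k; apply: ((sqk k (al + be)%R (al - be)%R).2 _ z hz); rewrite e1 e2.
    case: (eqVneq k i) => [->|hk]; first by left.
    by right; apply: (idD (hI k)); apply: alk.
  + by move=> h; case: nbe; exact: (h j).
  + by move=> h; case: nal; exact: (h i).
- move=> h1; split; first exact: hcap_ideal.
  split.
    have [w hw] := hPr (Ordinal n0).
    by exists w => hw'; apply: hw; exact: hw'.
  move=> x y _ _ hs.
  have hk k : P k (x - y)%R \/ P k (x + y)%R.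
    by apply/(sqk k) => z hz; exact: (hs z hz k).
  case: (classic (exists k, ~ quot_char (P k) 2)) => [[k0 nk0]|hall].
  + have q2 k : k != k0 -> quot_char (P k) 2.
      by move=> hne; apply: NNPP => nq; case/eqP: hne; apply: h1.
    case: (hk k0) => hk0; [left|right] => k; (case: (eqVneq k k0) => [->//|ne]);
      have := char2_both (hI k) (q2 k ne) (hk k); case => //.
  + have q2 k : quot_char (P k) 2 by apply: NNPP => nq; apply: hall; exists k.
    left => k; exact: (char2_both (hI k) (q2 k) (hk k)).1.
Qed.
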